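(* Let $\phi\in C^3((0,\infty))$, $\eta=\phi'$ and $\hat\eta(r)=\eta(r)+2\eta(2r)$, and suppose there are constants $0<a_0<\tilde r_1<\tilde r_2<2a_0$ and $a_1>a_0$ such that: $\eta'(r)>0$ for $0<r<\tilde r_1$ and $\eta'(r)<0$ for $r>\tilde r_1$; $\eta''(r)<0$ for $0<r<\tilde r_2$ and $\eta''(r)>0$ for $r>\tilde r_2$; $\hat\eta(r)<0$ for $0<r<a_0$ and $\hat\eta(r)>0$ for $r>a_0$; $\hat\eta'(r)>0$ for $0<r<a_1$ and $\hat\eta'(r)<0$ for $r>a_1$. Let $N,K$ be positive integers with $K<N-1$ and define $\hat{\mathbf\Psi}^F:(0,\infty)^{2N+1}\to\mathbb R^{2N+1}$ by $\hat\psi^F_j(\mathbf r)=\eta(r_j)+2\eta(2r_j)$ for $-N\le j\le -K$ and for $K\le j\le N$, and $\hat\psi^F_j(\mathbf r)=\eta(r_j)+\eta(r_j+r_{j-1})+\eta(r_j+r_{j+1})+[2\eta(2r_K)-\eta(r_K+r_{K-1})-\eta(r_K+r_{K+1})]$ for $-K+1\le j\le K-1$. Suppose $r_L,r_U$ satisfy $\tilde r_2/2<r_L<r_U$ and $\eta'(r_U)+12\eta'(2r_L)\ge0$. If $\mathbf\Phi=(\Phi_{-N},\dots,\Phi_N)\in\mathbb R^{2N+1}$ satisfies $\eta(r_L)+4\eta(2r_L)-2\eta(2r_U)<\Phi_j<\eta(r_U)+4\eta(2r_U)-2\eta(2r_L)$ for $j=-N,\dots,N$, then $\hat{\mathbf\Psi}^F(\mathbf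 r)=\mathbf\Phi$ has a unique solution $\mathbf r$ in $\Omega=(r_L,r_U)^{2N+1}$.
   Context: $\hat{\mathbf\Psi}^F$ is the (symmetrized) internal conjugate force of the force-based quasicontinuum approximation of a one-dimensional atomic chain with nearest and next-nearest neighbour interactions given by the pair potential $\phi$, and $\mathbf\Phi$ is an external conjugate force. *)

(* Defs.v *)
From Stdlib Require Import Reals ZArith Lra.
From Coquelicot Require Import Coquelicot.
Open Scope R_scope.

Definition etahat (eta : R -> R) (r : R) : R := eta r + 2 * eta (2 * r).

(* A configuration is r : Z -> R, only indices -N..N are meaningful.
   psi_j = eta(r_j) + 2 eta(2 r_j)                    for K <= |j| (<= N),
   psi_j = eta(r_j) + eta(r_j + r_{j-1}) + eta(r_j + r_{j+1})
           + [2 eta(2 r_K) - eta(r_K + r_{K-1}) - eta(r_K + r_{K+1})]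
                                                     for |j| <= K-1. *)
Definition psiF (eta : R -> R) (K : Z) (r : Z -> R) (j : Z) : R :=
  if (K <=? Z.abs j)%Z then eta (r j) + 2 * eta (2 * r j)
  else eta (r j) + eta (r j + r (j - 1)%Z) + eta (r j + r (j + 1)%Z)
       + (2 * eta (2 * r K) - eta (r K + r (K - 1)%Z) - eta (r K + r (K + 1)%Z)).

Definition in_range (N : nat) (j : Z) : Prop := (- Z.of_nat N <= j <= Z.of_nat N)%Z.

(* Main.v *)
Require Import Defs.
From Stdlib Require Import Reals ZArith.
From Coquelicot Require Import Coquelicot.
From Stdlib Require Import Lra Lia ClassicalEpsilon Classical FunctionalExtensionality.
Open Scope R_scope.

Ltac rabs := unfold Rabs in *; repeat match goal with
  | |- context [Rcase_abs ?x] => destruct (Rcase_abs x)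
  | H : context [Rcase_abs ?x] |- _ => destruct (Rcase_abs x) end; lra.

Lemma deriv_lo (f f' : R -> R) a b lo : a <= b ->
  (forall x, a <= x <= b -> derivable_pt_lim f x (f' x)) ->
  (forall x, a <= x <= b -> lo <= f' x) -> lo * (b - a) <= f b - f a.
Proof.
  intros Hab Hd Hl. destruct (Req_dec a b) as [->|Hne].
  - replace (b - b) with 0 by ring. lra.
  - destruct (MVT_cor2 f f' a b) as [c [Hc1 Hc2]]; [lra|auto|].
    rewrite Hc1. apply Rmult_le_compat_r; [lra| apply Hl; lra].
Qed.

Lemma deriv_hi (f f' : R -> R) a b hi : a <= b ->
  (forall x, a <= x <= b -> derivable_pt_lim f x (f' x)) ->
  (forall x, a <= x <= b -> f' x <= hi) -> f b - f a <= hi * (b - a).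
Proof.
  intros Hab Hd Hl. destruct (Req_dec a b) as [->|Hne].
  - replace (b - b) with 0 by ring. lra.
  - destruct (MVT_cor2 f f' a b) as [c [Hc1 Hc2]]; [lra|auto|].
    rewrite Hc1. apply Rmult_le_compat_r; [lra| apply Hl; lra].
Qed.

Lemma geom_zero (d C q : R) : 0 <= q < 1 -> 0 <= C ->
  (forall n, Rabs d <= C * q ^ n) -> d = 0.
Proof.
  intros Hq HC H. destruct (Req_dec d 0) as [|Hd]; auto. exfalso.
  assert (Hpos : 0 < Rabs d / (C + 1)).
  { apply Rdiv_lt_0_compat; [apply Rabs_pos_lt; auto | lra]. }
  destruct (pow_lt_1_zero q ltac:(rabs) _ Hpos) as [N HN].
  specialize (HN N (Nat.le_refl _)). specialize (H N).
  assert (0 <= q ^ N) by (apply pow_le; lra).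
  rewrite Rabs_right in HN by lra.
  apply (Rmult_lt_compat_r (C+1)) in HN; [|lra].
  unfold Rdiv in HN. rewrite Rmult_assoc, Rinv_l in HN by lra.
  nra.
Qed.

Lemma lim_bound (u : nat -> R) l a B n :
  Un_cv u l -> (forall k, Rabs (u (n + k)%nat - a) <= B) -> Rabs (l - a) <= B.
Proof.
  intros Hu Hb. destruct (Rle_dec (Rabs (l - a)) B) as [|Hn]; auto. exfalso.
  destruct (Hu (Rabs (l - a) - B)) as [N HN]; [lra|].
  specialize (HN (n + N)%nat ltac:(lia)). specialize (Hb N).
  unfold R_dist in HN. rabs.
Qed.

Lemma fixpoint (T : (Z -> R) -> (Z -> R)) (lo hi q : R) :
  0 <= q < 1 -> lo <= hi ->
  (forall y, (forall i, lo <= y i <= hi) -> forall i, lo <= T y i <= hi) ->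
  (forall y y' M, (forall i, lo <= y i <= hi) -> (forall i, lo <= y' i <= hi) ->
     (forall i, Rabs (y i - y' i) <= M) -> forall i, Rabs (T y i - T y' i) <= q * M) ->
  exists x, (forall i, lo <= x i <= hi) /\ (forall i, T x i = x i).
Proof.
  intros Hq Hlh Hbox Hc.
  set (xs := fix xs (n : nat) : Z -> R := match n with O => fun _ => lo | S n => T (xs n) end).
  assert (Hxb : forall n i, lo <= xs n i <= hi).
  { induction n; simpl; intros; [lra| apply Hbox; auto]. }
  assert (Hstep : forall n i, Rabs (xs (S n) i - xs n i) <= (hi - lo) * q ^ n).
  { induction n; intros i.
    - simpl. specialize (Hxb 1%nat i). simpl in Hxb. specialize (Hxb). rabs.
    - change (xs (S (S n))) with (T (xs (S n))). change (xs (S n)) with (T (xs n)) at 2.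
      replace ((hi - lo) * q ^ S n) with (q * ((hi - lo) * q ^ n)) by (simpl; ring).
      apply Hc; auto. }
  set (B := fun n => (hi - lo) * q ^ n / (1 - q)).
  assert (Htail : forall n m i, Rabs (xs (n + m)%nat i - xs n i) <= B n).
  { intros n m i.
    assert (H : Rabs (xs (n + m)%nat i - xs n i) <= (hi - lo) * (q ^ n - q ^ (n + m)) / (1 - q)).
    { induction m.
      - rewrite Nat.add_0_r. replace (q ^ n - q ^ n) with 0 by ring.
        unfold Rdiv. rewrite Rmult_0_r, Rmult_0_l. rewrite Rminus_diag, Rabs_R0. lra.
      - replace (n + S m)%nat with (S (n + m)) by lia.
        specialize (Hstep (n + m)%nat i).
        apply Rle_trans with (Rabs (xs (S (n + m)) i - xs (n + m)%nat i) + Rabs (xs (n + m)%nat i - xs n i)).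
        { replace (xs (S (n + m)) i - xs n i) with ((xs (S (n + m)) i - xs (n + m)%nat i) + (xs (n + m)%nat i - xs n i)) by ring.
          apply Rabs_triang. }
        replace ((hi - lo) * (q ^ n - q ^ S (n + m)) / (1 - q)) with
          ((hi - lo) * q ^ (n + m) + (hi - lo) * (q ^ n - q ^ (n + m)) / (1 - q)).
        + lra.
        + simpl. field. lra. }
    eapply Rle_trans; [exact H|]. unfold B. unfold Rdiv.
    apply Rmult_le_compat_r; [apply Rlt_le, Rinv_0_lt_compat; lra|].
    assert (0 <= q ^ (n + m)) by (apply pow_le; lra). nra. }
  assert (HB0 : forall n, 0 <= B n).
  { intros n. unfold B. apply Rmult_le_pos; [apply Rmult_le_pos; [lra| apply pow_le; lra] | apply Rlt_le, Rinv_0_lt_compat; lra]. }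
  assert (HBS : forall n, B (S n) <= B n).
  { intros n. unfold B. simpl. unfold Rdiv.
    apply Rmult_le_compat_r; [apply Rlt_le, Rinv_0_lt_compat; lra|].
    assert (0 <= q ^ n) by (apply pow_le; lra). apply Rmult_le_compat_l; [lra|]. nra. }
  assert (Hcauchy : forall i, Cauchy_crit (fun n => xs n i)).
  { intros i eps Heps.
    assert (Hpos : 0 < eps * (1 - q) / (2 * (hi - lo + 1))).
    { apply Rdiv_lt_0_compat; nra. }
    destruct (pow_lt_1_zero q ltac:(rabs) _ Hpos) as [N HN].
    exists N. intros n m Hn Hm. unfold R_dist.
    specialize (HN N (Nat.le_refl _)).
    assert (HBN : 2 * B N < eps).
    { unfold B. assert (0 <= q ^ N) by (apply pow_le; lra).
      rewrite Rabs_right in HN by lra.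
      apply (Rmult_lt_compat_r (2 * (hi - lo + 1))) in HN; [|lra].
      unfold Rdiv in HN. rewrite Rmult_assoc, Rinv_l in HN by lra.
      apply (Rmult_lt_compat_r (/ (1 - q))) in HN; [|apply Rinv_0_lt_compat; lra].
      replace (q ^ N * (2 * (hi - lo + 1)) * / (1 - q)) with (q ^ N * 2 * (hi - lo + 1) * / (1 - q)) in HN by ring.
      unfold Rdiv. 
      assert (0 <= q ^ N * / (1 - q)) by (apply Rmult_le_pos; [lra| apply Rlt_le, Rinv_0_lt_compat; lra]).
      assert (q ^ N * 2 * (hi - lo + 1) * / (1 - q) = 2 * ((hi - lo) * q ^ N * / (1 - q)) + 2 * (q ^ N * / (1-q))) by ring.
      replace (eps * (1 - q) * 1 * / (1 - q)) with eps in HN by (field; lra). lra. }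
    pose proof (Htail N (n - N)%nat i) as H1. pose proof (Htail N (m - N)%nat i) as H2.
    replace (N + (n - N))%nat with n in H1 by lia. replace (N + (m - N))%nat with m in H2 by lia.
    rabs. }
  set (L := fun i => proj1_sig (Rcomplete.R_complete _ (Hcauchy i))).
  assert (HL : forall i, Un_cv (fun n => xs n i) (L i)).
  { intros i. unfold L. destruct (Rcomplete.R_complete _ (Hcauchy i)); auto. }
  assert (HLn : forall n i, Rabs (L i - xs n i) <= B n).
  { intros n i. apply (lim_bound _ _ _ _ n (HL i)). intros k. apply Htail. }
  assert (HLb : forall i, lo <= L i <= hi).
  { intros i. assert (Rabs (L i - (lo + hi) / 2) <= (hi - lo) / 2).
    { apply (lim_bound _ _ _ _ 0 (HL i)). intros k. specialize (Hxb k i). simpl. rabs. }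
    rabs. }
  exists L. split; auto. intros i.
  apply Rminus_diag_uniq.
  apply (geom_zero _ (2 * ((hi - lo) / (1 - q))) q); auto.
  { apply Rmult_le_pos; [lra|]. apply Rdiv_le_0_compat; lra. }
  intros n.
  assert (H1 : Rabs (T L i - T (xs n) i) <= q * B n).
  { apply Hc; auto. }
  assert (H2 : Rabs (xs (S n) i - L i) <= B (S n)).
  { rewrite Rabs_minus_sym. apply HLn. }
  change (xs (S n)) with (T (xs n)) in H2.
  assert (Rabs (T L i - L i) <= 2 * B n).
  { apply Rle_trans with (Rabs (T L i - T (xs n) i) + Rabs (T (xs n) i - L i)).
    { replace (T L i - L i) with ((T L i - T (xs n) i) + (T (xs n) i - L i)) by ring. apply Rabs_triang. }
    specialize (HBS n). specialize (HB0 n). nra. }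
  unfold B in H. replace (2 * ((hi - lo) / (1 - q)) * q ^ n) with (2 * ((hi - lo) * q ^ n / (1 - q))) by (field; lra).
  exact H.
Qed.

Lemma fix_unique (T : (Z -> R) -> (Z -> R)) (lo hi q : R) :
  0 <= q < 1 -> lo <= hi ->
  (forall y, (forall i, lo <= y i <= hi) -> forall i, lo <= T y i <= hi) ->
  (forall y y' M, (forall i, lo <= y i <= hi) -> (forall i, lo <= y' i <= hi) ->
     (forall i, Rabs (y i - y' i) <= M) -> forall i, Rabs (T y i - T y' i) <= q * M) ->
  forall x x', (forall i, lo <= x i <= hi) -> (forall i, lo <= x' i <= hi) ->
  (forall i, T x i = x i) -> (forall i, T x' i = x' i) -> forall i, x i = x' i.
Proof.
  intros Hq Hlh Hbox Hc x x' Hx Hx' Fx Fx' i.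
  apply Rminus_diag_uniq. apply (geom_zero _ (hi - lo) q); auto; [lra|].
  intros n. revert i. induction n; intros i.
  - simpl. specialize (Hx i). specialize (Hx' i). rabs.
  - rewrite <- (Fx i), <- (Fx' i). simpl.
    replace ((hi - lo) * (q * q ^ n)) with (q * ((hi - lo) * q ^ n)) by ring.
    apply Hc; auto.
Qed.

Lemma cont_of_ex f t : ex_derive f t -> continuity_pt f t.
Proof. intros H. apply continuity_pt_filterlim. exact (ex_derive_continuous f t H). Qed.

Theorem theorem4p5
  (phi eta eta1 eta2 : R -> R) (a0 rt1 rt2 a1 : R) (N K : nat)
  (rL rU : R) (Phi : Z -> R) :
  (forall r, 0 < r -> is_derive phi r (eta r)) ->
  (forall r, 0 < r -> is_derive eta r (eta1 r)) ->
  (forall r, 0 < r -> is_derive eta1 r (eta2 r)) ->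
  (forall r, 0 < r -> continuous eta2 r) ->
  0 < a0 -> a0 < rt1 -> rt1 < rt2 -> rt2 < 2 * a0 -> a0 < a1 ->
  (forall r, 0 < r < rt1 -> eta1 r > 0) ->
  (forall r, r > rt1 -> eta1 r < 0) ->
  (forall r, 0 < r < rt2 -> eta2 r < 0) ->
  (forall r, r > rt2 -> eta2 r > 0) ->
  (forall r, 0 < r < a0 -> etahat eta r < 0) ->
  (forall r, r > a0 -> etahat eta r > 0) ->
  (forall r, 0 < r < a1 -> Derive (etahat eta) r > 0) ->
  (forall r, r > a1 -> Derive (etahat eta) r < 0) ->
  (0 < K)%nat -> (K < N - 1)%nat ->
  rt2 / 2 < rL -> rL < rU ->
  eta1 rU + 12 * eta1 (2 * rL) >= 0 ->
  (forall j, in_range N j ->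
     eta rL + 4 * eta (2 * rL) - 2 * eta (2 * rU) < Phi j
     < eta rU + 4 * eta (2 * rU) - 2 * eta (2 * rL)) ->
  exists r : Z -> R,
    (forall j, in_range N j -> rL < r j < rU) /\
    (forall j, in_range N j -> psiF eta (Z.of_nat K) r j = Phi j) /\
    (forall r' : Z -> R,
       (forall j, in_range N j -> rL < r' j < rU) ->
       (forall j, in_range N j -> psiF eta (Z.of_nat K) r' j = Phi j) ->
       forall j, in_range N j -> r' j = r j).
Proof.
  intros Hphi He He1 Hc2 Ha0 H01 H12 H2a Ha01 Hp1 Hn1 Hn2 Hp2 Hh0 Hh0' Hd1 Hd1'
    HK0 HKN HrL HLU Hcond HPhi.
  assert (De : forall x, 0 < x -> derivable_pt_lim eta x (eta1 x)).
  { intros x Hx. apply is_derive_Reals. auto. }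
  assert (D1 : forall x, 0 < x -> derivable_pt_lim eta1 x (eta2 x)).
  { intros x Hx. apply is_derive_Reals. auto. }
  assert (HrL0 : 0 < rL) by lra.
  assert (Hm0 : eta1 (2 * rL) < 0) by (apply Hn1; lra).
  assert (HpU : eta1 rU > 0) by lra.
  assert (HUt : rU <= rt1).
  { destruct (Rle_dec rU rt1) as [|Hn]; auto. specialize (Hn1 rU ltac:(lra)). lra. }
  set (m := - eta1 (2 * rL)). set (p := eta1 rU).
  assert (Hm : 0 < m) by (unfold m; lra).
  assert (Hpm : 12 * m <= p) by (unfold m, p; lra).

  assert (L1 : forall x, rL <= x <= rU -> p <= eta1 x).
  { intros x Hx.
    assert (H := deriv_hi eta1 eta2 x rU 0 ltac:(lra)).
    assert (eta1 rU - eta1 x <= 0 * (rU - x)).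
    { apply H. intros c Hc. apply D1. lra. intros c Hc. left. apply Hn2. lra. }
    unfold p. lra. }
  assert (L2 : forall s, 2 * rL <= s <= 2 * rU -> - m <= eta1 s <= 0).
  { intros s Hs. split.
    - assert (H := deriv_lo eta1 eta2 (2 * rL) s 0 ltac:(lra)).
      assert (0 * (s - 2 * rL) <= eta1 s - eta1 (2 * rL)).
      { apply H. intros c Hc. apply D1. lra. intros c Hc. left. apply Hp2. lra. }
      unfold m. lra.
    - left. apply Hn1. lra. }
  assert (L3 : forall s t, 2 * rL <= s <= t -> t <= 2 * rU -> - m * (t - s) <= eta t - eta s <= 0).
  { intros s t Hs Ht. split.
    - apply deriv_lo with (f' := eta1). lra. intros c Hc. apply De. lra.
      intros c Hc. apply L2. lra.
    - assert (eta t - eta s <= 0 * (t - s)); [|lra].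
      apply deriv_hi with (f' := eta1). lra. intros c Hc. apply De. lra.
      intros c Hc. apply L2. lra. }
  assert (L4 : forall s t, rL <= s <= t -> t <= rU -> p * (t - s) <= eta t - eta s).
  { intros s t Hs Ht. apply deriv_lo with (f' := eta1). lra. intros c Hc. apply De. lra.
    intros c Hc. apply L1. lra. }
  assert (Lip : forall u v, 2 * rL <= u <= 2 * rU -> 2 * rL <= v <= 2 * rU ->
            Rabs (eta u - eta v) <= m * Rabs (u - v)).
  { intros u v Hu Hv. destruct (Rle_dec u v).
    - pose proof (L3 u v ltac:(lra) ltac:(lra)).
      rewrite (Rabs_right (eta u - eta v)) by lra. rewrite (Rabs_left1 (u - v)) by lra. lra.
    - pose proof (L3 v u ltac:(lra) ltac:(lra)).
      rewrite (Rabs_left1 (eta u - eta v)) by lra. rewrite (Rabs_right (u - v)) by lra. lra. }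
  assert (Heta2 : eta (2 * rU) <= eta (2 * rL)).
  { pose proof (L3 (2 * rL) (2 * rU) ltac:(lra) ltac:(lra)). lra. }
  assert (Hhat : forall s t, rL <= s <= t -> t <= rU ->
            (p - 4 * m) * (t - s) <= etahat eta t - etahat eta s).
  { intros s t Hs Ht. unfold etahat.
    pose proof (L4 s t Hs Ht). pose proof (L3 (2 * s) (2 * t) ltac:(lra) ltac:(lra)). lra. }
  set (c := fun j => epsilon (inhabits 0) (fun t => rL < t < rU /\ (in_range N j -> etahat eta t = Phi j))).
  assert (Hcs : forall j, rL < c j < rU /\ (in_range N j -> etahat eta (c j) = Phi j)).
  { intros j. unfold c. apply epsilon_spec.
    destruct (classic (in_range N j)) as [Hj|Hj].
    - destruct (HPhi j Hj) as [Hl Hu].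
      destruct (Ranalysis5.IVT_interv (fun t => etahat eta t - Phi j) rL rU) as [z [Hz1 Hz2]].
      + intros a Ha. apply cont_of_ex. unfold etahat. auto_derive.
        repeat split; eexists; apply He; lra.
      + lra.
      + unfold etahat. lra.
      + unfold etahat. lra.
      + exists z. assert (z <> rL) by (intros ->; unfold etahat in Hz2; lra).
        assert (z <> rU) by (intros ->; unfold etahat in Hz2; lra).
        split; [lra|]. intros _. lra.
    - exists ((rL + rU) / 2). split; [lra|]. tauto. }
  assert (Hcu : forall j t, in_range N j -> rL <= t <= rU -> etahat eta t = Phi j -> t = c j).
  { intros j t Hj Ht Heq. destruct (Hcs j) as [Hcj1 Hcj2]. specialize (Hcj2 Hj).
    destruct (Rtotal_order t (c j)) as [H|[H|H]]; auto.
    - pose proof (Hhat t (c j) ltac:(lra) ltac:(lra)). nra.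
    - pose proof (Hhat (c j) t ltac:(lra) ltac:(lra)). nra. }
  set (k := Z.of_nat K).
  set (G := fun (y : Z -> R) j t => eta t + eta (t + y (j - 1)%Z) + eta (t + y (j + 1)%Z)
     + (2 * eta (2 * c k) - eta (c k + y (k - 1)%Z) - eta (c k + c (k + 1)%Z))).
  set (box := fun y : Z -> R => forall i, rL <= y i <= rU).
  assert (HGmono : forall y j s t, box y -> rL <= s <= t -> t <= rU ->
            (p - 2 * m) * (t - s) <= G y j t - G y j s).
  { intros y j s t Hy Hs Ht. unfold G.
    pose proof (Hy (j - 1)%Z). pose proof (Hy (j + 1)%Z).
    pose proof (L4 s t Hs Ht).
    pose proof (L3 (s + y (j - 1)%Z) (t + y (j - 1)%Z) ltac:(lra) ltac:(lra)).
    pose proof (L3 (s + y (j + 1)%Z) (t + y (j + 1)%Z) ltac:(lra) ltac:(lra)).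
    lra. }
  assert (HGb : forall y j, box y -> in_range N j -> G y j rL < Phi j < G y j rU).
  { intros y j Hy Hj. destruct (HPhi j Hj) as [Hl Hu]. unfold G.
    pose proof (Hy (j - 1)%Z). pose proof (Hy (j + 1)%Z). pose proof (Hy (k - 1)%Z).
    destruct (Hcs k) as [Hck _]. destruct (Hcs (k + 1)%Z) as [Hck1 _].
    pose proof (L3 (2 * rL) (rL + y (j - 1)%Z) ltac:(lra) ltac:(lra)).
    pose proof (L3 (2 * rL) (rL + y (j + 1)%Z) ltac:(lra) ltac:(lra)).
    pose proof (L3 (2 * rL) (2 * c k) ltac:(lra) ltac:(lra)).
    pose proof (L3 (c k + y (k - 1)%Z) (2 * rU) ltac:(lra) ltac:(lra)).
    pose proof (L3 (c k + c (k + 1)%Z) (2 * rU) ltac:(lra) ltac:(lra)).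
    pose proof (L3 (rU + y (j - 1)%Z) (2 * rU) ltac:(lra) ltac:(lra)).
    pose proof (L3 (rU + y (j + 1)%Z) (2 * rU) ltac:(lra) ltac:(lra)).
    pose proof (L3 (2 * c k) (2 * rU) ltac:(lra) ltac:(lra)).
    pose proof (L3 (2 * rL) (c k + y (k - 1)%Z) ltac:(lra) ltac:(lra)).
    pose proof (L3 (2 * rL) (c k + c (k + 1)%Z) ltac:(lra) ltac:(lra)).
    split; lra. }
  assert (HGlip : forall y y' j s M, box y -> box y' -> (forall i, Rabs (y i - y' i) <= M) ->
            rL <= s <= rU -> Rabs (G y j s - G y' j s) <= 3 * m * M).
  { intros y y' j s M Hy Hy' HM Hs. unfold G.
    pose proof (Hy (j - 1)%Z). pose proof (Hy (j + 1)%Z). pose proof (Hy (k - 1)%Z).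
    pose proof (Hy' (j - 1)%Z). pose proof (Hy' (j + 1)%Z). pose proof (Hy' (k - 1)%Z).
    destruct (Hcs k) as [Hck _].
    pose proof (Lip (s + y (j - 1)%Z) (s + y' (j - 1)%Z) ltac:(lra) ltac:(lra)) as A1.
    pose proof (Lip (s + y (j + 1)%Z) (s + y' (j + 1)%Z) ltac:(lra) ltac:(lra)) as A2.
    pose proof (Lip (c k + y (k - 1)%Z) (c k + y' (k - 1)%Z) ltac:(lra) ltac:(lra)) as A3.
    replace (s + y (j - 1)%Z - (s + y' (j - 1)%Z)) with (y (j - 1)%Z - y' (j - 1)%Z) in A1 by ring.
    replace (s + y (j + 1)%Z - (s + y' (j + 1)%Z)) with (y (j + 1)%Z - y' (j + 1)%Z) in A2 by ring.
    replace (c k + y (k - 1)%Z - (c k + y' (k - 1)%Z)) with (y (k - 1)%Z - y' (k - 1)%Z) in A3 by ring.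
    pose proof (HM (j - 1)%Z). pose proof (HM (j + 1)%Z). pose proof (HM (k - 1)%Z).
    apply Rmult_le_compat_l with (r := m) in H5; [|lra].
    apply Rmult_le_compat_l with (r := m) in H6; [|lra].
    apply Rmult_le_compat_l with (r := m) in H7; [|lra].
    set (e1 := eta (s + y (j - 1)%Z) - eta (s + y' (j - 1)%Z)) in *.
    set (e2 := eta (s + y (j + 1)%Z) - eta (s + y' (j + 1)%Z)) in *.
    set (e3 := eta (c k + y (k - 1)%Z) - eta (c k + y' (k - 1)%Z)) in *.
    replace (eta s + eta (s + y (j - 1)%Z) + eta (s + y (j + 1)%Z) +
      (2 * eta (2 * c k) - eta (c k + y (k - 1)%Z) - eta (c k + c (k + 1)%Z)) -
      (eta s + eta (s + y' (j - 1)%Z) + eta (s + y' (j + 1)%Z) +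
      (2 * eta (2 * c k) - eta (c k + y' (k - 1)%Z) - eta (c k + c (k + 1)%Z))))
      with (e1 + e2 - e3) by (unfold e1, e2, e3; ring).
    clearbody e1 e2 e3. rabs. }
  set (a := fun y j => epsilon (inhabits 0) (fun t => rL < t < rU /\ (box y -> in_range N j -> G y j t = Phi j))).
  assert (Has : forall y j, rL < a y j < rU /\ (box y -> in_range N j -> G y j (a y j) = Phi j)).
  { intros y j. unfold a. apply epsilon_spec.
    destruct (classic (box y /\ in_range N j)) as [[Hy Hj]|Hn].
    - destruct (HGb y j Hy Hj) as [Hl Hu].
      destruct (Ranalysis5.IVT_interv (fun t => G y j t - Phi j) rL rU) as [z [Hz1 Hz2]].
      + intros t Ht. apply cont_of_ex. unfold G.
        pose proof (Hy (j - 1)%Z). pose proof (Hy (j + 1)%Z). auto_derive.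
        repeat split; eexists; apply He; lra.
      + lra.
      + lra.
      + lra.
      + exists z. assert (z <> rL) by (intros ->; lra).
        assert (z <> rU) by (intros ->; lra).
        split; [lra|]. intros _ _. lra.
    - exists ((rL + rU) / 2). split; [lra|]. tauto. }
  assert (HGu : forall y j t t', box y -> rL <= t <= rU -> rL <= t' <= rU ->
            (p - 2 * m) * Rabs (t - t') <= Rabs (G y j t - G y j t')).
  { intros y j t t' Hy Ht Ht'. destruct (Rle_dec t t').
    - pose proof (HGmono y j t t' Hy ltac:(lra) ltac:(lra)).
      assert (0 <= (p - 2 * m) * (t' - t)) by (apply Rmult_le_pos; lra).
      rewrite (Rabs_left1 (t - t')) by lra. rewrite (Rabs_left1 (G y j t - G y j t')) by lra. lra.
    - pose proof (HGmono y j t' t Hy ltac:(lra) ltac:(lra)).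
      assert (0 <= (p - 2 * m) * (t - t')) by (apply Rmult_le_pos; lra).
      rewrite (Rabs_right (t - t')) by lra. rewrite (Rabs_right (G y j t - G y j t')) by lra. lra. }
  set (T := fun y j => if (Z.abs j <? k)%Z then a y j else c j).
  assert (Tbox : forall y j, rL < T y j < rU).
  { intros y j. unfold T. destruct (Z.abs j <? k)%Z; [apply Has | apply Hcs]. }
  assert (HkN : (k + 1 <= Z.of_nat N)%Z) by (unfold k; lia).
  assert (Hk1 : (1 <= k)%Z) by (unfold k; lia).
  set (q := 3 * m / (p - 2 * m)).
  assert (Hq : 0 <= q < 1).
  { unfold q. split.
    - apply Rdiv_le_0_compat; lra.
    - apply (Rmult_lt_reg_r (p - 2 * m)); [lra|]. unfold Rdiv.
      rewrite Rmult_assoc, Rinv_l by lra. lra. }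
  assert (Tc : forall y y' M, box y -> box y' -> (forall i, Rabs (y i - y' i) <= M) ->
            forall i, Rabs (T y i - T y' i) <= q * M).
  { intros y y' M Hy Hy' HM i. pose proof (HM i) as HMi.
    assert (HM0 : 0 <= M) by (pose proof (Rabs_pos (y i - y' i)); lra).
    unfold T. destruct (Z.ltb_spec (Z.abs i) k) as [Hi|Hi].
    - assert (Hir : in_range N i) by (unfold in_range; lia).
      destruct (Has y i) as [Ha1 Ha2]. destruct (Has y' i) as [Hb1 Hb2].
      specialize (Ha2 Hy Hir). specialize (Hb2 Hy' Hir).
      pose proof (HGu y i (a y i) (a y' i) Hy ltac:(lra) ltac:(lra)) as H1.
      pose proof (HGlip y y' i (a y' i) M Hy Hy' HM ltac:(lra)) as H2.
      replace (G y i (a y i)) with (G y' i (a y' i)) in H1 by lra.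
      rewrite (Rabs_minus_sym (G y' i (a y' i))) in H1.
      assert (H3 : (p - 2 * m) * Rabs (a y i - a y' i) <= 3 * m * M) by lra.
      unfold q. apply (Rmult_le_reg_l (p - 2 * m)); [lra|].
      replace ((p - 2 * m) * (3 * m / (p - 2 * m) * M)) with (3 * m * M) by (field; lra).
      exact H3.
    - rewrite Rminus_diag, Rabs_R0. apply Rmult_le_pos; lra. }
  destruct (fixpoint T rL rU q Hq ltac:(lra)) as [x [Hxb Hxf]].
  { intros y Hy i. pose proof (Tbox y i). lra. }
  { intros y y' M Hy Hy' HM. apply Tc; auto. }
  assert (Hx : x = T x) by (apply functional_extensionality; intros i; symmetry; auto).
  assert (Hxk : x k = c k).
  { rewrite Hx. unfold T. destruct (Z.ltb_spec (Z.abs k) k); [lia|auto]. }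
  assert (Hxk1 : x (k + 1)%Z = c (k + 1)%Z).
  { rewrite Hx. unfold T. destruct (Z.ltb_spec (Z.abs (k + 1)) k); [lia|auto]. }
  exists x. split; [|split].
  - intros j _. rewrite Hx. apply Tbox.
  - intros j Hj. fold k. unfold psiF. destruct (Z.leb_spec k (Z.abs j)) as [Hk|Hk].
    + rewrite Hx. unfold T. destruct (Z.ltb_spec (Z.abs j) k); [lia|].
      destruct (Hcs j) as [_ HH]. specialize (HH Hj). unfold etahat in HH. exact HH.
    + rewrite Hxk, Hxk1.
      assert (Hxj : x j = a x j).
      { rewrite <- (Hxf j). unfold T. destruct (Z.ltb_spec (Z.abs j) k); [auto|lia]. }
      destruct (Has x j) as [_ HH]. specialize (HH Hxb Hj). rewrite <- Hxj in HH.
      unfold G in HH. exact HH.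
  - intros r' Hr'b Hr'e.
    assert (Hr'c : forall j, in_range N j -> (k <= Z.abs j)%Z -> r' j = c j).
    { intros j Hj Hk. apply Hcu; auto. specialize (Hr'b j Hj). lra.
      specialize (Hr'e j Hj). unfold psiF in Hr'e. fold k in Hr'e.
      destruct (Z.leb_spec k (Z.abs j)); [|lia]. unfold etahat. exact Hr'e. }
    set (y' := fun i => if (Z.abs i <? k)%Z then r' i else c i).
    assert (Hy'r : forall i, in_range N i -> y' i = r' i).
    { intros i Hi. unfold y'. destruct (Z.ltb_spec (Z.abs i) k); auto.
      symmetry. apply Hr'c; auto. }
    assert (Hy'b : box y').
    { intros i. unfold y'. destruct (Z.ltb_spec (Z.abs i) k) as [Hik|Hik].
      - assert (Hir : in_range N i) by (unfold in_range; lia). specialize (Hr'b i Hir). lra.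
      - destruct (Hcs i). lra. }
    assert (Hy'f : forall i, T y' i = y' i).
    { intros i. unfold T. destruct (Z.ltb_spec (Z.abs i) k) as [Hi|Hi].
      - assert (Hir : in_range N i) by (unfold in_range; lia).
        assert (Hyi : y' i = r' i) by (apply Hy'r; auto).
        destruct (Has y' i) as [Ha1 Ha2]. specialize (Ha2 Hy'b Hir).
        pose proof (HGu y' i (a y' i) (y' i) Hy'b ltac:(lra) (Hy'b i)) as H1.
        assert (HG : G y' i (y' i) = Phi i).
        { rewrite <- (Hr'e i Hir). unfold psiF. fold k.
          destruct (Z.leb_spec k (Z.abs i)); [lia|].
          unfold G. rewrite Hyi.
          rewrite (Hy'r (i - 1)%Z) by (unfold in_range; lia).
          rewrite (Hy'r (i + 1)%Z) by (unfold in_range; lia).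
          rewrite (Hy'r (k - 1)%Z) by (unfold in_range; lia).
          rewrite <- (Hr'c k) by (unfold in_range; lia).
          rewrite <- (Hr'c (k + 1)%Z) by (unfold in_range; lia).
          reflexivity. }
        rewrite Ha2, HG, Rminus_diag, Rabs_R0 in H1.
        assert (Rabs (a y' i - y' i) <= 0) by nra.
        pose proof (Rabs_pos (a y' i - y' i)).
        apply Rminus_diag_uniq. apply Rabs_eq_0. lra.
      - unfold y'. destruct (Z.ltb_spec (Z.abs i) k); [lia|auto]. }
    intros j Hj.
    assert (Hxy : forall i, y' i = x i).
    { apply (fix_unique T rL rU q Hq ltac:(lra)); auto.
      all: first [ intros y y'' M Hy Hy'' HM; apply Tc; auto
                 | intros y Hy i; pose proof (Tbox y i); lra ]. }
    rewrite <- (Hy'r j Hj). apply Hxy.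
Qed.
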